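(* For every Halin graph $H$, $AT(H)\le 4$.
   Context: All graphs are finite and simple. A Halin graph $H=T\cup C_n$ is a plane graph obtained from a plane tree $T$ having no vertex of degree two and at least one vertex of degree at least three, by adding a cycle $C_n$ that connects all the leaves of $T$ in the cyclic order determined by the planar drawing of $T$. For a digraph $D$, an Eulerian subdigraph is a spanning subdigraph (a subset of the arcs, possibly empty) in which every vertex has indegree equal to outdegree; it is even or odd according to the parity of its number of arcs. The Alon–Tarsi number $AT(G)$ is the smallest integer $k$ such that $G$ has an orientation $D$ with maximum outdegree at most $k-1$ for which the numbers of even and odd Eulerian subdigraphs of $D$ differ. *)

(* Defs.v *)
From mathcomp Require Import all_boot.
Set Implicit Arguments. Unset Strict Implicit. Unset Printing Implicit Defensive.

(* Graphs: a relation e on a finType V (simple graph = symmetric, irreflexive). *)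

Definition deg (V : finType) (t : rel V) (v : V) : nat := #|[set u | t v u]|.

Definition leaf (V : finType) (t : rel V) (v : V) : bool := deg t v == 1.

(* t is a tree on all of V: symmetric, irreflexive, connected, and with
   exactly #|V| - 1 edges (each edge counted as two ordered pairs). *)
Definition is_tree (V : finType) (t : rel V) : Prop :=
  [/\ symmetric t, irreflexive t,
      (forall x y, connect t x y) &
      #|[set p : V * V | t p.1 p.2]| = 2 * (#|V| - 1)].

(* A rotation system of t (= a plane embedding of the tree t):
   for each vertex v, rot v is a cyclic permutation of the neighbourhood of v. *)
Definition is_rotation (V : finType) (t : rel V) (rot : V -> V -> V) : Prop :=
  forall v, (forall u, t v u -> t v (rot v u)) /\
            (forall u w, t v u -> t v w -> exists k, iter k (rot v) u = w).

Definition face_next (V : finType) (rot : V -> V -> V) (d : V * V) : V * V :=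
  (d.2, rot d.2 d.1).

(* l' is the leaf following the leaf l in the cyclic order of leaves determined
   by the plane tree (t, rot): walking around the boundary of the unique face
   starting from the dart leaving l, l' is the first leaf reached. *)
Definition next_leaf (V : finType) (t : rel V) (rot : V -> V -> V) (l l' : V) : Prop :=
  [/\ leaf t l, leaf t l' &
      exists y k, [/\ t l y,
        (iter k (face_next rot) (l, y)).2 = l' &
        forall j, j < k -> ~~ leaf t (iter j (face_next rot) (l, y)).2]].

(* e is (the edge relation of) a Halin graph T \cup C: T a plane tree with no
   vertex of degree 2 and some vertex of degree >= 3, C the cycle through the
   leaves of T in the cyclic order given by the plane drawing. *)
Definition is_halin (V : finType) (e : rel V) : Prop :=
  exists (t : rel V) (rot : V -> V -> V),
    [/\ is_tree t, is_rotation t rot,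
        (forall v, deg t v != 2),
        (exists v, 3 <= deg t v) &
        forall x y, e x y <-> (t x y \/ next_leaf t rot x y \/ next_leaf t rot y x)].

Definition is_orientation (V : finType) (e : rel V) (D : {set V * V}) : bool :=
  [forall x, forall y, ((x, y) \in D) ==> e x y] &&
  [forall x, forall y, e x y ==> (((x, y) \in D) (+) ((y, x) \in D))].

Definition outdeg (V : finType) (D : {set V * V}) (v : V) : nat :=
  #|[set y | (v, y) \in D]|.
Definition indeg (V : finType) (D : {set V * V}) (v : V) : nat :=
  #|[set y | (y, v) \in D]|.

Definition eulerian (V : finType) (D A : {set V * V}) : bool :=
  (A \subset D) && [forall v, outdeg A v == indeg A v].

Definition n_even_eulerian (V : finType) (D : {set V * V}) : nat :=
  #|[set A : {set V * V} | eulerian D A & ~~ odd #|A|]|.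
Definition n_odd_eulerian (V : finType) (D : {set V * V}) : nat :=
  #|[set A : {set V * V} | eulerian D A & odd #|A|]|.

Definition AT_ok (V : finType) (e : rel V) (k : nat) : bool :=
  [exists D : {set V * V},
     [&& is_orientation e D, [forall v, outdeg D v < k] &
         n_even_eulerian D != n_odd_eulerian D]].

(* An acyclic orientation has
   max outdegree <= #|V| - 1 and exactly one (empty, even) Eulerian
   subdigraph, so k = #|V| is always admissible; hence the minimum over
   k <= #|V| + 1 below is the true minimum. *)
Definition AT (V : finType) (e : rel V) : nat :=
  \big[minn/#|V|.+1]_(k < #|V|.+2 | AT_ok e k) k.

(* Main.v *)
Require Import Defs.
From mathcomp Require Import all_boot.
From mathcomp Require Import zify.
From Stdlib Require Import Classical.
Set Implicit Arguments. Unset Strict Implicit. Unset Printing Implicit Defensive.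

Section Tree.
Variables (V : finType) (t : rel V).

Lemma boundary (X : {set V}) r y : r \in X -> y \notin X -> connect t r y ->
  exists x z, [/\ x \in X, z \notin X & t x z].
Proof.
move=> rX yX /connectP [s Hp Hy].
elim: s r rX Hp Hy => [|z s IH] r rX /= Hp Hy.
  by rewrite Hy rX in yX.
move/andP: Hp => [trz Hp].
case zX: (z \in X); last by exists r, z; rewrite zX.
exact: IH zX Hp Hy.
Qed.

Lemma grow r : symmetric t -> (forall x y, connect t x y) -> forall n, 0 < n <= #|V| ->
  exists (X : {set V}) (rk : V -> nat) (p : V -> V),
   [/\ #|X| = n, r \in X, {in X &, injective rk}, rk r = 0 &
     forall y, y \in X -> rk y < n /\ (y != r -> [/\ p y \in X, t y (p y) & rk (p y) < rk y])].
Proof.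
move=> tsym conn; elim=> [//|n IH] /andP [_ Hn].
case: n IH Hn => [|n] IH Hn.
  exists [set r], (fun _ => 0), id; split => //.
  - by rewrite cards1.
  - by rewrite inE.
  - by move=> a b; rewrite !inE => /eqP -> /eqP ->.
  - by move=> y; rewrite inE => /eqP ->; rewrite eqxx.
have [X [rk [p [cX rX irk rk0 HX]]]] := IH (ltnW Hn).
have: exists y, y \notin X.
  apply/existsP; rewrite -negb_forall; apply/negP => /forallP all.
  have : #|X| = #|V|.
    have XT : X = setT by apply/setP => x; rewrite inE; apply: all.
    by rewrite XT cardsT.
  by rewrite cX => E; rewrite E ltnn in Hn.
move=> [y yX].
have [x [z [xX zX txz]]] := boundary rX yX (conn r y).
exists (z |: X), (fun u => if u == z then n.+1 else rk u),
       (fun u => if u == z then x else p u); split.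
- by rewrite cardsU1 zX cX.
- by rewrite inE rX orbT.
- move=> a b; rewrite !inE => /orP [/eqP ->|aX] /orP [/eqP ->|bX] //=; rewrite ?eqxx.
  + case: eqP => [->//|_] E; have := (HX b bX).1; by rewrite -E ltnn.
  + case: eqP => [->//|_] E; have := (HX a aX).1; by rewrite E ltnn.
  + case: eqP => [ea|_]; first by move: zX; rewrite -ea aX.
    case: eqP => [eb|_]; first by move: zX; rewrite -eb bX.
    exact: irk.
- case: eqP => [e|//]; by move: zX; rewrite -e rX.
- move=> u; rewrite !inE => /orP [/eqP ->|uX]; rewrite ?eqxx.
    have xz : (x == z) = false by apply/eqP => e; move: zX; rewrite -e xX.
    split=> // zr; rewrite xz xX; split => //; [by rewrite tsym | exact (HX x xX).1].
  have uz : (u == z) = false by apply/eqP => e; move: zX; rewrite -e uX.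
  rewrite uz.
  have [H1 H2] := HX u uX; split; first by apply: (ltn_trans H1).
  move=> ur; have [H3 H4 H5] := H2 ur.
  have pz : (p u == z) = false by apply/eqP => e; move: zX; rewrite -e H3.
  by rewrite pz H3 orbT.
Qed.

Lemma tree_struct r : is_tree t ->
  exists (rk : V -> nat) (p : V -> V),
    [/\ injective rk, (forall u, u != r -> rk r < rk u),
        (forall u, u != r -> t u (p u) /\ rk (p u) < rk u) &
        forall a b, t a b -> (a != r /\ b = p a) \/ (b != r /\ a = p b)].
Proof.
move=> [tsym tirr conn cE].
have nV : 0 < #|V| <= #|V| by rewrite leqnn andbT; apply/card_gt0P; exists r.
have [X [rk [p [cX rX irk rk0 HX]]]] := grow r tsym conn nV.
have XT : X = [set: V] by apply/eqP; rewrite eqEcard subsetT cardsT cX leqnn.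
have Xa a : a \in X by rewrite XT inE.
have irk' : injective rk by move=> a b; apply: irk.
have Hp u : u != r -> t u (p u) /\ rk (p u) < rk u.
  by move=> ur; have [_ /(_ ur) [_ ? ?]] := HX u (Xa u).
exists rk, p; split => //.
  by move=> u ur; rewrite rk0 lt0n; apply/negP => /eqP; rewrite -rk0 => /irk'/eqP; rewrite (negbTE ur).
set E := [set d : V * V | t d.1 d.2].
set Q1 := [set (u, p u) | u in [set~ r]].
set Q2 := [set (p u, u) | u in [set~ r]].
have c1 : #|Q1| = #|V| - 1.
  rewrite card_imset ?cardsC1 ?subn1 //; by move=> a b [].
have c2 : #|Q2| = #|V| - 1.
  rewrite card_imset ?cardsC1 ?subn1 //; by move=> a b [].
have dis : Q1 :&: Q2 = set0.
  apply/setP => d; rewrite !inE; apply/negP => /andP [/imsetP [a a1 ->] /imsetP [b b1 [e1 e2]]].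
  rewrite !inE in a1 b1.
  have := (Hp a a1).2; have := (Hp b b1).2; rewrite -e1 -e2.
  move=> h1 h2; have := ltn_trans h1 h2; by rewrite ltnn.
have QE : Q1 :|: Q2 = E.
  apply/eqP; rewrite eqEcard; apply/andP; split.
    apply/subsetP => d; rewrite !inE => /orP [] /imsetP [a a1 ->]; rewrite !inE in a1;
      have := (Hp a a1).1 => //= h; by rewrite tsym.
  by rewrite cardsU dis cards0 subn0 c1 c2 cE; lia.
move=> a b tab.
have : (a, b) \in E by rewrite inE.
rewrite -QE inE => /orP [] /imsetP [u u1 [e1 e2]]; rewrite !inE in u1.
  by left; rewrite e1 e2.
by right; rewrite e1 e2.
Qed.

End Tree.


Section Walk.
Variables (V : finType) (t : rel V) (rot : V -> V -> V).
Hypothesis tsym : symmetric t.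
Hypothesis tirr : irreflexive t.
Hypothesis hrot : is_rotation t rot.
Local Notation F := (face_next rot).

Lemma leaf_uniq l a b : leaf t l -> t l a -> t l b -> a = b.
Proof.
rewrite /leaf /deg => /cards1P [x Hx] ha hb.
have : a \in [set u | t l u] by rewrite inE.
have : b \in [set u | t l u] by rewrite inE.
by rewrite Hx !inE => /eqP -> /eqP ->.
Qed.

Lemma iter_rot_in v u n : t v u -> t v (iter n (rot v) u).
Proof. by move=> h; elim: n => //= n IH; apply: (hrot v).1. Qed.

Lemma rot_inj v : {in [set u | t v u] &, injective (rot v)}.
Proof.
apply/imset_injP.
have -> : [set rot v x | x in [set u | t v u]] = [set u | t v u].
  apply/eqP; rewrite eqEsubset; apply/andP; split.
    by apply/subsetP => w /imsetP [x]; rewrite !inE => hx ->; apply: (hrot v).1.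
  apply/subsetP => w; rewrite inE => hw.
  have h1 : t v (rot v w) by apply: (hrot v).1.
  have [k hk] := (hrot v).2 _ _ h1 hw.
  apply/imsetP; exists (iter k (rot v) w); first by rewrite inE iter_rot_in.
  by rewrite -iterS iterSr.
by rewrite eqxx.
Qed.

Lemma rot_fix_leaf v x : t v x -> rot v x = x -> leaf t v.
Proof.
move=> hx hf; rewrite /leaf /deg; apply/cards1P; exists x; apply/setP => u.
rewrite !inE; apply/idP/idP => [hu|/eqP ->//].
have [k <-] := (hrot v).2 _ _ hx hu.
by apply/eqP; elim: k => //= k ->.
Qed.

Definition td (d : V * V) := t d.1 d.2.

Lemma F_td d : td d -> td (F d).
Proof. by rewrite /td /= => h; apply: (hrot _).1; rewrite tsym. Qed.

Lemma iter_td k d : td d -> td (iter k F d).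
Proof. by move=> h; elim: k => //= k IH; apply: F_td. Qed.

Lemma F_inj d1 d2 : td d1 -> td d2 -> F d1 = F d2 -> d1 = d2.
Proof.
case: d1 => a1 b1; case: d2 => a2 b2; rewrite /td /= => h1 h2 [e1 e2].
subst b2; congr pair; apply: (rot_inj (v := b1)); rewrite ?inE 1?tsym //.
Qed.

Lemma backward k1 k2 d1 d2 : td d1 -> td d2 -> leaf t d1.1 -> leaf t d2.1 ->
  (forall j, j < k1 -> ~~ leaf t (iter j F d1).2) ->
  (forall j, j < k2 -> ~~ leaf t (iter j F d2).2) ->
  iter k1 F d1 = iter k2 F d2 -> d1 = d2.
Proof.
move=> t1 t2 l1 l2.
elim: k1 k2 => [|k1 IH] [|k2] //= n1 n2.
- move=> e; have := n2 k2 (ltnSn _); by move: l1; rewrite e /= => ->.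
- move=> e; have := n1 k1 (ltnSn _); by move: l2; rewrite -e /= => ->.
- move=> e; apply: (IH k2).
  + by move=> j hj; apply: n1; apply: ltnW.
  + by move=> j hj; apply: n2; apply: ltnW.
  + by apply: F_inj => //; apply: iter_td.
Qed.

Lemma next_fun l u1 u2 : next_leaf t rot l u1 -> next_leaf t rot l u2 -> u1 = u2.
Proof.
move=> [ll lu1 [y1 [k1 [ty1 e1 n1]]]] [_ lu2 [y2 [k2 [ty2 e2 n2]]]].
have ey := leaf_uniq ll ty1 ty2; subst y2.
have [lt|ge] := ltnP k1 k2.
  by have := n2 _ lt; rewrite e1 lu1.
move: ge; rewrite leq_eqVlt => /orP [/eqP ek|lt]; first by rewrite -e1 -e2 ek.
by have := n1 _ lt; rewrite e2 lu2.
Qed.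

Lemma prev_inj l u1 u2 : next_leaf t rot u1 l -> next_leaf t rot u2 l -> u1 = u2.
Proof.
move=> [l1 ll [y1 [k1 [ty1 e1 n1]]]] [l2 _ [y2 [k2 [ty2 e2 n2]]]].
have t1 : td (u1, y1) by [].
have t2 : td (u2, y2) by [].
have w1 := iter_td k1 t1; have w2 := iter_td k2 t2.
have ew : iter k1 F (u1, y1) = iter k2 F (u2, y2).
  move: w1 w2 e1 e2; rewrite /td.
  case: (iter k1 F (u1, y1)) => a1 b1; case: (iter k2 F (u2, y2)) => a2 b2 /= h1 h2 E1 E2.
  subst b1 b2; congr pair; apply: (leaf_uniq ll); by rewrite tsym.
have := backward t1 t2 l1 l2 n1 n2 ew; by case.
Qed.

Lemma no_self_next l : is_tree t -> ~ next_leaf t rot l l.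
Proof.
move=> tr [ll _ [y [k [tly ek nk]]]].
have [rk [p [irk rmin hp hst]]] := tree_struct y tr.
pose h j := (iter j F (l, y)).2.
have td0 : td (l, y) by [].
have tdj j : t (iter j F (l, y)).1 (h j) := iter_td j td0.
have hS j : iter j.+1 F (l, y) = (h j, rot (h j) (iter j F (l, y)).1) by rewrite iterS.
have hk : h k = l by [].
have k0 : 0 < k.
  case: k ek nk hk => // ek _ hk; move: tly; by rewrite -[y]/(h 0) hk tirr.
have claim j0 : j0 <= k -> h j0 != l -> h j0 = y.
  move=> hj0 hl0; apply/eqP; apply/negPn/negP => hy0.
  pose P := fun i : 'I_k.+1 => h i != l.
  have P0 : P (Ordinal (hj0 : j0 < k.+1)) by [].
  case: (arg_maxnP (fun i : 'I_k.+1 => rk (h i)) P0) => j Pj jmax.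
  have rj0 := jmax _ P0; rewrite /= in rj0.
  have wy : h j != y.
    apply/eqP => e; have := rmin _ hy0; rewrite -e => lt.
    by have := leq_trans lt rj0; rewrite ltnn.
  case: j Pj jmax wy rj0 => [[|i] hi] Pj jmax wy _; first by move: wy; rewrite /h /= eqxx.
  have ik : i.+1 < k.
    rewrite ltn_neqAle -ltnS hi andbT; apply/eqP => e.
    by move: Pj; rewrite /P /= e hk eqxx.
  pose w := h i.+1; pose x := h i.
  have e1 : (iter i.+1 F (l, y)).1 = x by rewrite hS.
  have txw : t x w by have := tdj i.+1; rewrite e1.
  have e2 : h i.+2 = rot w x by rewrite -e1 {1}/h hS.
  have twz : t w (rot w x).
    have := tdj i.+2; rewrite -e2; congr (t _ _); by rewrite hS.
  have xl : x != l.
    apply/eqP => e; move/eqP: wy; apply; apply: (leaf_uniq ll _ tly); by rewrite -e.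
  have zl : h i.+2 != l.
    apply/eqP => e; move/eqP: wy; apply; apply: (leaf_uniq ll _ tly); by rewrite -e e2 tsym.
  have rx : rk x <= rk w.
    have hi' : i < k.+1 by apply: (ltn_trans (ltnSn i)); apply: ltnW.
    exact: (jmax (Ordinal hi') xl).
  have rz : rk (h i.+2) <= rk w.
    have hi' : i.+2 < k.+1 by [].
    exact: (jmax (Ordinal hi') zl).
  have low a : t w a -> rk a <= rk w -> a = p w.
    move=> twa ra.
    have aw : a != w by apply/eqP => e; move: twa; rewrite e tirr.
    have ra' : rk a < rk w.
      rewrite ltn_neqAle ra andbT; apply/eqP => /irk e; by rewrite e eqxx in aw.
    case: (hst _ _ twa) => [[_ ->] //| [ay e]].
    have := (hp a ay).2; rewrite -e => lt.
    by have := ltn_trans lt ra'; rewrite ltnn.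
  have ex : x = p w by apply: low; rewrite // tsym.
  have ez : rot w x = p w by apply: low; rewrite // -e2.
  have lw : leaf t w.
    apply: (@rot_fix_leaf w x); [by rewrite tsym | by rewrite ez -ex].
  by have := nk i.+1 ik; rewrite lw.
have h1 : h 1 = rot y l by [].
have ty1 : t y (h 1) by apply: (tdj 1).
have r1 : rot y l = l.
  rewrite -h1; case: (ltngtP k 1) => [|lt1|e]; first by case: k k0 {claim hk nk ek}.
    have n1 : ~~ leaf t (h 1) := nk 1 lt1.
    have h1l : h 1 != l by apply/eqP => e; rewrite e ll in n1.
    by have := claim 1 (ltnW lt1) h1l => e; move: ty1; rewrite e tirr.
  by rewrite -e.
have ly : leaf t y by apply: (@rot_fix_leaf y l); rewrite // tsym.
by have := nk 0 k0; rewrite /= ly.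
Qed.

End Walk.


Lemma card_le1_prop (V : finType) (A : {set V}) (P : V -> Prop) :
  (forall a, a \in A -> P a) -> (forall a b, P a -> P b -> a = b) -> #|A| <= 1.
Proof.
move=> hA hP; apply/card_le1_eqP => a b ha hb; apply: hP; exact: hA.
Qed.

Lemma card_le2 (V : finType) (A : {set V}) (P Q : V -> Prop) :
  (forall a, a \in A -> P a \/ Q a) -> (forall a b, P a -> P b -> a = b) ->
  (forall a b, Q a -> Q b -> a = b) -> #|A| <= 2.
Proof.
move=> hA hP hQ.
case: (classic (exists a, a \in A /\ P a)) => [[a [aA Pa]]|nP].
  rewrite (cardsD1 a A) aA add1n ltnS.
  apply: (card_le1_prop (P := Q)) => // u; rewrite !inE => /andP [ua uA].
  case: (hA u uA) => // Pu; by rewrite (hP _ _ Pu Pa) eqxx in ua.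
apply: (leq_trans (card_le1_prop (P := Q) _ hQ)) => // u uA.
case: (hA u uA) => // Pu; case: nP; by exists u.
Qed.

Lemma big_minn_le (I : eqType) (s : seq I) (P : pred I) (F : I -> nat) x0 i :
  i \in s -> P i -> \big[minn/x0]_(j <- s | P j) F j <= F i.
Proof.
elim: s => // a s IH; rewrite inE big_cons => /orP [/eqP <-|iS] Pi.
  by rewrite Pi geq_minl.
case: (P a); last exact: IH.
by apply: leq_trans (geq_minr _ _) (IH iS Pi).
Qed.

Theorem lemma3p2 (V : finType) (e : rel V) : is_halin e -> AT e <= 4.
Proof.
move=> [t [rot [tr hrot deg2 [v0 dv0] he]]].
have [tsym tirr conn cE] := tr.
have esym x y : e x y -> e y x.
  move/he => H; apply/he; case: H => [h|[h|h]]; [left; by rewrite tsym| by right; right| by right; left].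
have eirr x : ~~ e x x.
  apply/negP => /he [|[|]]; [by rewrite tirr| |]; exact: (no_self_next tsym tirr hrot tr).
have enl v u : e v u -> ~~ leaf t v -> t v u.
  move/he => [//|[[lv _ _]|[_ lv _]]]; by rewrite lv.
have eleaf l : leaf t l -> #|[set u | e l u]| <= 3.
  move=> ll.
  have sub : [set u | e l u] \subset [set u | t l u] :|: [set u | e l u && ~~ t l u].
    apply/subsetP => u; rewrite !inE => ->; by case: (t l u).
  apply: (leq_trans (subset_leq_card sub)); apply: (leq_trans (leq_card_setU _ _)).
  have -> : #|[set u | t l u]| = 1 by apply/eqP.
  rewrite add1n ltnS.
  apply: (card_le2 (P := fun u => next_leaf t rot l u) (Q := fun u => next_leaf t rot u l)).
  - move=> u; rewrite inE => /andP [/he euv ntu]; case: euv => [h|//]; by rewrite h in ntu.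
  - by move=> a b; apply: next_fun.
  - by move=> a b; apply: (prev_inj tsym hrot).
have [rk [p [irk rmin hp hst]]] := tree_struct v0 tr.
pose D := [set d : V * V | e d.1 d.2 && (rk d.2 < rk d.1)].
have oriD : is_orientation e D.
  apply/andP; split; apply/forallP => x; apply/forallP => y; apply/implyP.
    by rewrite inE => /andP [].
  move=> exy; rewrite !inE /= exy (esym _ _ exy) /=.
  have xy : x != y by apply/eqP => exy'; move: exy; rewrite exy' (negbTE (eirr y)).
  have : rk x != rk y by apply/eqP => /irk /eqP; rewrite (negbTE xy).
  case: (ltngtP (rk y) (rk x)) => //.
have outD v : outdeg D v < 4.
  rewrite /outdeg.
  have sub : [set y | (v, y) \in D] \subset [set u | e v u].
    by apply/subsetP => u; rewrite !inE => /andP [].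
  case lv: (leaf t v).
    by apply: leq_ltn_trans (subset_leq_card sub) _; rewrite ltnS; apply: eleaf.
  have sub2 : [set y | (v, y) \in D] \subset [set p v].
    apply/subsetP => u; rewrite !inE /= => /andP [evu ruv].
    have tvu := enl _ _ evu (negbT lv).
    case: (hst _ _ tvu) => [[_ ->//]|[uv0 ev]].
    have := (hp u uv0).2; rewrite -ev => lt.
    by have := ltn_trans lt ruv; rewrite ltnn.
  by apply: leq_ltn_trans (subset_leq_card sub2) _; rewrite cards1.
have eul A : eulerian D A -> A = set0.
  move=> /andP [AD /forallP bal].
  apply/eqP; apply/negPn/negP => /set0Pn [a0 a0A].
  case: (arg_maxnP (fun d : V * V => rk d.1) a0A) => d dA dmax.
  have := bal d.1; rewrite /outdeg /indeg.
  have -> : [set y | (y, d.1) \in A] = set0.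
    apply/setP => w; rewrite !inE; apply/negP => wA.
    have := dmax _ wA; rewrite /= => le.
    have := subsetP AD _ wA; rewrite inE /= => /andP [_ lt].
    by have := leq_trans lt le; rewrite ltnn.
  rewrite cards0 cards_eq0 => /eqP/setP/(_ d.2); rewrite !inE.
  case: d dA {dmax} => a b /= dA h; have dA2 : (a, b) \in A := dA; by rewrite h in dA2.
have ev : n_even_eulerian D = 1.
  rewrite /n_even_eulerian -(cards1 (set0 : {set V * V})); apply: eq_card => A.
  rewrite !inE; apply/idP/idP.
    by move=> /andP [/eul -> _].
  move/eqP => ->; rewrite cards0 /= andbT /eulerian sub0set /=.
  by apply/forallP => x; rewrite /outdeg /indeg; apply/eqP; apply: eq_card => y; rewrite !inE.
have od : n_odd_eulerian D = 0.
  apply/eqP; rewrite cards_eq0; apply/eqP/setP => A; rewrite !inE.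
  apply/negP => /andP [/eul -> ]; by rewrite cards0.
have ok : AT_ok e 4.
  apply/existsP; exists D; rewrite oriD ev od andbT /=; apply/forallP => v; exact: outD.
have V3 : 4 < #|V|.+2.
  rewrite !ltnS; apply: leq_trans dv0 _; exact: max_card.
rewrite /AT.
exact: (big_minn_le (fun k : 'I_#|V|.+2 => nat_of_ord k) #|V|.+1 (mem_index_enum (Ordinal V3)) ok).
Qed.
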